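(* Let $\Gamma$ be a negative-definite plumbing forest, $v$ a vertex with framing $-p<0$, and assume $\Gamma_{+1}$ is negative-definite. Then the sequence \[\mathbb{H}(\Gamma-v)\xrightarrow{\ \mathbb{A}\ }\mathbb{H}(\Gamma)\xrightarrow{\ \mathbb{B}\ }\mathbb{H}(\Gamma_{+1})\longrightarrow 0\] is exact.
   Context: A plumbing forest is a finite forest with integer vertex framings $m(v)$; its lattice is $\mathbb{Z}^{\text{vertices}}$ with pairing $(v,v)=m(v)$, $(v,w)=-1$ if $v,w$ adjacent, $0$ otherwise; negative-definite means this form is. $\mathrm{Char}(\Gamma)$: homomorphisms $k$ from the lattice to $\mathbb{Z}$ with $\langle k,x\rangle\equiv(x,x)\bmod 2$ for all $x$; $v^*=(v,-)$, $v^2=(v,v)$. Lattice homology $\mathbb{H}(\Gamma)$: the complex vector space with basis $\{1\otimes k:k\in\mathrm{Char}(\Gamma)\}$ modulo the relations (I) $1\otimes k\sim0$ if $|\langle k,u\rangle|>-u^2$ for some vertex $u$; (II) $1\otimes k\sim(-1)^{u^2}\otimes(k\mp2u^* )$ if $\langle k,u\rangle=\pm u^2$ for some vertex $u$. $\Gamma-v$ is $\Gamma$ with $v$ deleted; $\Gamma_{+1}$ is $\Gamma$ with the framing of $v$ changed to $-p+1$. For $k\in\mathrm{Char}(\Gamma-v)$ and $i\equiv p\bmod 2$, $k'_i\in\mathrm{Char}(\Gamma)$ agrees with $k$ on $w\ne v$ and takes value $i$ on $v$; $\mathbb{A}(k)=\sum_{i\equiv p\bmod 2,\ |i|\le p}1\otimes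 k'_i$ (the terms with $|i|>p$ vanish in $\mathbb{H}(\Gamma)$). For $k\in\mathrm{Char}(\Gamma)$, $k^{\pm}\in\mathrm{Char}(\Gamma_{+1})$ agree with $k$ on $w\ne v$ and $\langle k^\pm,v\rangle=\langle k,v\rangle\pm1$; $\mathbb{B}(k)=(-1/2)\otimes k^++(1/2)\otimes k^-$. These induce well-defined linear maps on lattice homology. *)

(* Defs.v *)
From HB Require Import structures.
From mathcomp Require Import all_boot all_order all_algebra.
From mathcomp Require Import reals.
From mathcomp.real_closed Require Export complex.
Set Implicit Arguments. Unset Strict Implicit. Unset Printing Implicit Defensive.
Import Order.TTheory GRing.Theory Num.Theory.
Local Open Scope ring_scope.

(* ---------- Plumbing graphs ----------
   A plumbing graph on the finite vertex type V is given by a framing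
   m : V -> int and an adjacency relation e : rel V. *)

Definition is_forest (V : finType) (e : rel V) : Prop :=
  [/\ symmetric e, irreflexive e &
      forall s : seq V, uniq s -> (3 <= size s)%N -> ~~ cycle e s].

Definition pair_vv (V : finType) (m : V -> int) (e : rel V) (a b : V) : int :=
  if a == b then m a else if e a b then -1 else 0.

Definition lform (V : finType) (m : V -> int) (e : rel V) (x y : V -> int) : int :=
  \sum_(a : V) \sum_(b : V) x a * y b * pair_vv m e a b.

Definition neg_definite (V : finType) (m : V -> int) (e : rel V) : Prop :=
  forall x : V -> int, (exists w, x w != 0) -> lform m e x x < 0.

(* A homomorphism k : Z^V -> Z is represented by its values k w = <k, w>
   on the basis vertices; <k, x> = sum_w k w * x w. *)
Definition Key (V : finType) := {ffun V -> int}.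

Definition kapp (V : finType) (k : Key V) (x : V -> int) : int :=
  \sum_(w : V) k w * x w.

Definition is_char (V : finType) (m : V -> int) (e : rel V) (k : Key V) : Prop :=
  forall x : V -> int, (kapp k x - lform m e x x) \in dvdz 2.

Definition dualv (V : finType) (m : V -> int) (e : rel V) (u : V) : Key V :=
  [ffun w => pair_vv m e u w].

(* ---------- Formal linear combinations ----------
   An element of the free K-vector space on Key V is represented by a finite
   list of (coefficient, generator) pairs; its coefficient function is
   [coef s].  Two lists represent the same vector iff their coef functions
   agree. *)
Definition comb (K : fieldType) (V : finType) := seq (K * Key V).

Definition coef (K : fieldType) (V : finType) (s : comb K V) (k : Key V) : K :=
  \sum_(q <- s) (if q.2 == k then q.1 else 0).

Definition in_free (K : fieldType) (V : finType) (m : V -> int) (e : rel V)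
  (s : comb K V) : Prop :=
  forall k, coef s k != 0 -> is_char m e k.

(* the basic relation vectors of lattice homology:
   (I)  1 (x) k                              if |<k,u>| > -u^2
   (II) 1 (x) k - (-1)^{u^2} (x) (k -+ 2 u-star) if <k,u> = +- u^2 *)
Definition basic_rel (K : fieldType) (V : finType) (m : V -> int) (e : rel V)
  (r : comb K V) : Prop :=
  exists (k : Key V) (u : V), is_char m e k /\
   ( (`|k u| > - m u /\ r = [:: (1, k)])
  \/ (k u = m u /\
        r = [:: (1, k); (- ((-1) ^ (m u)), [ffun w => k w - 2 * dualv m e u w])])
  \/ (k u = - m u /\
        r = [:: (1, k); (- ((-1) ^ (m u)), [ffun w => k w + 2 * dualv m e u w])]) ).

Definition in_rel (K : fieldType) (V : finType) (m : V -> int) (e : rel V)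
  (s : comb K V) : Prop :=
  exists l : seq (K * comb K V),
    (forall q, q \in l -> basic_rel m e q.2) /\
    forall k, coef s k = \sum_(q <- l) q.1 * coef q.2 k.

Definition csub (K : fieldType) (V : finType) (s t : comb K V) : comb K V :=
  s ++ [seq (- q.1, q.2) | q <- t].

Definition subv (V : finType) (v : V) := {w : V | w != v}.

Definition del_m (V : finType) (m : V -> int) (v : V) : subv v -> int :=
  fun w => m (val w).
Definition del_e (V : finType) (e : rel V) (v : V) : rel (subv v) :=
  fun a b => e (val a) (val b).

Definition plus1_m (V : finType) (m : V -> int) (v : V) (p : nat) : V -> int :=
  fun w => if w == v then - (p%:Z) + 1 else m w.

Definition kext (V : finType) (v : V) (k : Key (subv v)) (i : int) : Key V :=
  [ffun w => if insub w is Some w' then k w' else i].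

(* the integers i with i = p mod 2 and |i| <= p, namely -p, -p+2, ..., p *)
Definition Arange (p : nat) : seq int :=
  [seq (- (p%:Z) + 2 * (j%:Z)) | j <- iota 0 p.+1].

Definition mapA (K : fieldType) (V : finType) (v : V) (p : nat)
  (t : comb K (subv v)) : comb K V :=
  flatten [seq [seq (q.1, kext q.2 i) | i <- Arange p] | q <- t].

Definition kshift (V : finType) (v : V) (k : Key V) (d : int) : Key V :=
  [ffun w => if w == v then k w + d else k w].

Definition mapB (K : fieldType) (V : finType) (v : V) (s : comb K V) : comb K V :=
  flatten [seq [:: (- (1/2) * q.1, kshift v q.2 1); ((1/2) * q.1, kshift v q.2 (-1))]
          | q <- s].

Arguments del_m [V] m v _.
Arguments del_e [V] e v _ _.
Arguments mapA [K V] v p t.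
Arguments kext [V] v k i.

(* Main.v *)
Require Import Defs.
From HB Require Import structures.
From mathcomp Require Import all_boot all_order all_algebra.
From mathcomp Require Import reals.
From mathcomp.real_closed Require Import complex.
From mathcomp Require Import zify ring.
Set Implicit Arguments. Unset Strict Implicit. Unset Printing Implicit Defensive.
Import Order.TTheory GRing.Theory Num.Theory.
Local Open Scope ring_scope.

Section Gen.
Variable K : fieldType.

Definition ind (V : finType) (a x : Key V) : K := if a == x then 1 else 0.

Lemma cf_nil (V : finType) x : coef ([::] : comb K V) x = 0.
Proof. by rewrite /coef big_nil. Qed.

Lemma cf_cons (V : finType) c a (s : comb K V) x :
  coef ((c, a) :: s) x = c * ind a x + coef s x.
Proof. by rewrite /coef big_cons /ind /=; case: (a == x); rewrite ?mulr1 ?mulr0. Qed.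

Lemma cf_cat (V : finType) (s t : comb K V) x : coef (s ++ t) x = coef s x + coef t x.
Proof. by rewrite /coef big_cat. Qed.

Lemma cf_csub (V : finType) (s t : comb K V) x : coef (csub s t) x = coef s x - coef t x.
Proof.
rewrite /csub cf_cat; congr (_ + _); rewrite /coef big_map -sumrN.
by apply: eq_bigr => q _ /=; case: (q.2 == x); rewrite ?oppr0.
Qed.

Lemma cf_scale (V : finType) c (s : comb K V) x :
  coef [seq (c * y.1, y.2) | y <- s] x = c * coef s x.
Proof.
rewrite /coef big_map mulr_sumr; apply: eq_bigr => q _ /=.
by case: (q.2 == x); rewrite ?mulr0.
Qed.

Lemma cf_flatten (V : finType) (ss : seq (comb K V)) x :
  coef (flatten ss) x = \sum_(s <- ss) coef s x.
Proof. elim: ss => [|s ss IH] /=; first by rewrite cf_nil big_nil.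
by rewrite cf_cat IH big_cons. Qed.

Definition flat (W V : finType) (g : Key W -> comb K V) (s : comb K W) : comb K V :=
  flatten [seq [seq (q.1 * y.1, y.2) | y <- g q.2] | q <- s].

Lemma cf_flat (W V : finType) (g : Key W -> comb K V) s x :
  coef (flat g s) x = \sum_(q <- s) q.1 * coef (g q.2) x.
Proof. by rewrite /flat cf_flatten big_map; apply: eq_bigr => q _; rewrite cf_scale. Qed.

Lemma pairing (V : finType) (s : comb K V) (T : seq (Key V)) (G : Key V -> K) :
  uniq T -> {subset map snd s <= T} ->
  \sum_(q <- s) q.1 * G q.2 = \sum_(x <- T) coef s x * G x.
Proof.
move=> uT; elim: s => [|[c a] s IH] sub /=.
  by rewrite big_nil; symmetry; apply: big1 => x _; rewrite cf_nil mul0r.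
rewrite big_cons IH; last by move=> y hy; apply: sub; rewrite inE hy orbT.
have aT : a \in T by apply: sub; rewrite inE eqxx.
under [RHS]eq_bigr => x _ do rewrite cf_cons mulrDl.
rewrite big_split /=; congr (_ + _).
rewrite (bigD1_seq a) //= /ind eqxx mulr1 big1 ?addr0 // => x /negbTE nx.
by rewrite eq_sym nx mulr0 mul0r.
Qed.

Definition lin (V : finType) (P : comb K V -> Prop) :=
  forall (L : seq (K * comb K V)) s, (forall q, q \in L -> P q.2) ->
    (forall k, coef s k = \sum_(q <- L) q.1 * coef q.2 k) -> P s.

Lemma P_nil (V : finType) (P : comb K V -> Prop) : lin P -> P [::].
Proof. by move=> hP; apply: (hP [::]) => // k; rewrite cf_nil big_nil. Qed.

Lemma P_ext (V : finType) (P : comb K V -> Prop) s s' : lin P -> P s ->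
  (forall k, coef s' k = coef s k) -> P s'.
Proof. move=> hP Ps e; apply: (hP [:: (1, s)]) => [q|k]; first by rewrite inE => /eqP->.
by rewrite big_cons big_nil addr0 mul1r. Qed.

Definition combL (V : finType) (L : seq (K * comb K V)) : comb K V :=
  flatten [seq [seq (q.1 * y.1, y.2) | y <- q.2] | q <- L].

Lemma cf_combL (V : finType) (L : seq (K * comb K V)) x :
  coef (combL L) x = \sum_(q <- L) q.1 * coef q.2 x.
Proof. by rewrite /combL cf_flatten big_map; apply: eq_bigr => q _; rewrite cf_scale. Qed.

Lemma in_rel_lin (V : finType) (m : V -> int) e : lin (@in_rel K V m e).
Proof.
move=> L s HL Hs.
suff [l [H1 H2]] : in_rel m e (combL L).
  by exists l; split => // k; rewrite Hs -H2 cf_combL.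
elim: L HL {Hs} => [|[c r] L IH] HL.
  by exists [::]; split => // k; rewrite cf_combL !big_nil.
have [lr [Hr1 Hr2]] := HL (c, r) (mem_head _ _).
have [l' [H1 H2]] : in_rel m e (combL L).
  by apply: IH => q hq; apply: HL; rewrite inE hq orbT.
exists ([seq (c * y.1, y.2) | y <- lr] ++ l'); split.
  move=> q; rewrite mem_cat => /orP[/mapP[y hy ->]|hq] /=; [exact: Hr1|exact: H1].
move=> k; rewrite cf_combL big_cons -(cf_combL L) H2 big_cat big_map /= Hr2 mulr_sumr.
by congr (_ + _); apply: eq_bigr => y _; rewrite mulrA.
Qed.

Lemma span_lift (W V : finType) (P : comb K V -> Prop) (g : Key W -> comb K V)
  (z : comb K W) (s : comb K V) : lin P ->
  (forall x, coef z x != 0 -> P (g x)) ->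
  (forall k, coef s k = \sum_(q <- z) q.1 * coef (g q.2) k) -> P s.
Proof.
move=> hP Hg Hs.
apply: (hP [seq (coef z x, g x) | x <- [seq x <- undup (map snd z) | coef z x != 0]]).
  by move=> q /mapP[x]; rewrite mem_filter => /andP[hx _] ->; apply: Hg.
move=> k; rewrite Hs big_map big_filter (@pairing _ z (undup (map snd z)) (fun x => coef (g x) k) (undup_uniq _)).
  by rewrite [RHS]big_mkcond; apply: eq_bigr => x _; case: eqP => //= ->; rewrite mul0r.
by move=> y; rewrite mem_undup.
Qed.

Lemma rel_lift (W V : finType) (m : W -> int) e (P : comb K V -> Prop)
  (g : Key W -> comb K V) (z : comb K W) (s : comb K V) : lin P ->
  (forall r, basic_rel m e r -> P (flat g r)) -> in_rel m e z ->
  (forall k, coef s k = \sum_(q <- z) q.1 * coef (g q.2) k) -> P s.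
Proof.
move=> hP Hg [l [Hl1 Hl2]] Hs.
apply: (hP [seq (q.1, flat g q.2) | q <- l]).
  by move=> q /mapP[y hy ->]; apply: Hg; apply: Hl1.
move=> k; rewrite Hs big_map.
set T := undup (map snd z ++ flatten [seq map snd q.2 | q <- l]).
have uT : uniq T by apply: undup_uniq.
rewrite (pairing (fun x => coef (g x) k) uT); last first.
  by move=> y hy; rewrite mem_undup mem_cat hy.
rewrite [LHS](eq_bigr (fun x => \sum_(q <- l) q.1 * coef q.2 x * coef (g x) k)); last by move=> x _; rewrite Hl2 mulr_suml.
rewrite exchange_big /=; apply: eq_big_seq => q hq.
rewrite cf_flat (pairing (fun x => coef (g x) k) uT).
  by rewrite mulr_sumr; apply: eq_bigr => x _; rewrite mulrA.
move=> y hy; rewrite mem_undup mem_cat; apply/orP; right.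
case/mapP: hy => yy hyy ->; apply/allpairsPdep; exists q, yy; split => //; by case: yy hyy.
Qed.

End Gen.

Section Keys.
Variable V : finType.
Variable v : V.

Definition restrict (k : Key V) : Key (subv v) := [ffun w => k (val w)].

Lemma kshiftE (k : Key V) d w : kshift v k d w = if w == v then k w + d else k w.
Proof. by rewrite ffunE. Qed.

Lemma kshift_v (k : Key V) d : kshift v k d v = k v + d.
Proof. by rewrite /kshift ffunE eqxx. Qed.

Lemma kshift0 (k : Key V) : kshift v k 0 = k.
Proof. by apply/ffunP => w; rewrite ffunE; case: ifP => _; rewrite ?addr0. Qed.

Lemma kshiftD (k : Key V) a b : kshift v (kshift v k a) b = kshift v k (a + b).
Proof. by apply/ffunP => w; rewrite /kshift !ffunE; case: (w == v); rewrite ?addrA. Qed.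

Lemma kext_v (k : Key (subv v)) i : kext v k i v = i.
Proof. by rewrite ffunE insubF // eqxx. Qed.

Lemma kext_val (k : Key (subv v)) i w : kext v k i (val w) = k w.
Proof. by rewrite ffunE valK. Qed.

Lemma kext_restrict (k : Key V) i : kext v (restrict k) i = kshift v k (i - k v).
Proof.
apply/ffunP => w; rewrite /kshift !ffunE; case: insubP => [w' hw hv|].
  by rewrite /restrict ffunE hv (negbTE hw).
by move/negbNE => /eqP->; rewrite eqxx addrC subrK.
Qed.

Lemma restrict_kext (k : Key (subv v)) i : restrict (kext v k i) = k.
Proof. by apply/ffunP => w; rewrite ffunE kext_val. Qed.

Lemma kshift_kext (k : Key (subv v)) i d : kshift v (kext v k i) d = kext v k (i + d).
Proof.
apply/ffunP => w; rewrite !ffunE; case: insubP => [w' hw _|]; first by rewrite (negbTE hw).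
by move/negbNE => ->.
Qed.

Lemma restrict_kshift (k : Key V) d : restrict (kshift v k d) = restrict k.
Proof. by apply/ffunP => w; rewrite !ffunE (negbTE (valP w)). Qed.

Lemma sum_split (R : nmodType) (F : V -> R) :
  \sum_(w : V) F w = F v + \sum_(w : subv v) F (val w).
Proof.
rewrite (bigD1 v) //=; congr (_ + _).
rewrite (reindex_omap (val : subv v -> V) insub); last first.
  by move=> i hi; rewrite insubT.
by apply: eq_bigl => w; rewrite valK eqxx andbT (valP w).
Qed.

Lemma pair_del (m : V -> int) e (a b : subv v) :
  pair_vv (del_m m v) (del_e e v) a b = pair_vv m e (val a) (val b).
Proof. by rewrite /pair_vv val_eqE. Qed.

Lemma kapp_split (k : Key V) (x : V -> int) :
  kapp k x = k v * x v + kapp (restrict k) (fun w => x (val w)).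
Proof. by rewrite /kapp sum_split; congr (_ + _); apply: eq_bigr => w _; rewrite ffunE. Qed.

Lemma lform_split (m : V -> int) e (x : V -> int) :
  lform m e x x = x v * x v * m v
    + x v * \sum_(b : subv v) x (val b) * pair_vv m e v (val b)
    + x v * \sum_(a : subv v) x (val a) * pair_vv m e (val a) v
    + lform (del_m m v) (del_e e v) (fun w => x (val w)) (fun w => x (val w)).
Proof.
have E1 : \sum_(b : V) x v * x b * pair_vv m e v b = x v * x v * m v
    + x v * \sum_(b : subv v) x (val b) * pair_vv m e v (val b).
  rewrite sum_split {1}/pair_vv eqxx mulr_sumr; congr (_ + _).
  by apply: eq_bigr => b _; ring.
have E2 : \sum_(a : subv v) \sum_(b : V) x (val a) * x b * pair_vv m e (val a) b =
   x v * \sum_(a : subv v) x (val a) * pair_vv m e (val a) v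
    + lform (del_m m v) (del_e e v) (fun w => x (val w)) (fun w => x (val w)).
  rewrite mulr_sumr /lform -big_split /=; apply: eq_bigr => a _.
  rewrite sum_split; congr (_ + _); first by ring.
  try by apply: eq_bigr => b _; ring.
rewrite /lform sum_split E1 E2; ring.
Qed.

Lemma kapp_shift (k : Key V) d (x : V -> int) :
  kapp (kshift v k d) x = kapp k x + d * x v.
Proof.
rewrite !kapp_split restrict_kshift kshift_v; ring.
Qed.

Lemma lform_change (m m' : V -> int) e (x : V -> int) :
  (forall w, w != v -> m' w = m w) ->
  lform m' e x x = lform m e x x + (m' v - m v) * x v * x v.
Proof.
move=> hm; rewrite !lform_split.
have hp : forall a b : V, a != v -> pair_vv m' e a b = pair_vv m e a b.
  by move=> a b hb; rewrite /pair_vv; case: eqP => // hab; subst a; rewrite hm.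
have hp' : forall a b : V, b != v -> pair_vv m' e a b = pair_vv m e a b.
  by move=> a b hb; rewrite /pair_vv; case: eqP => // ->; rewrite hm.
have -> : lform (del_m m' v) (del_e e v) (fun w => x (val w)) (fun w => x (val w))
  = lform (del_m m v) (del_e e v) (fun w => x (val w)) (fun w => x (val w)).
  apply: eq_bigr => a _; apply: eq_bigr => b _; rewrite !pair_del hp //; exact: (valP a).
have S1 : \sum_(b : subv v) x (val b) * pair_vv m' e v (val b)
   = \sum_(b : subv v) x (val b) * pair_vv m e v (val b).
  by apply: eq_bigr => b _; rewrite hp' //; exact: (valP b).
have S2 : \sum_(b : subv v) x (val b) * pair_vv m' e (val b) v
   = \sum_(b : subv v) x (val b) * pair_vv m e (val b) v.
  by apply: eq_bigr => b _; rewrite hp //; exact: (valP b).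
rewrite S1 S2; ring.
Qed.

Lemma even_sq (a : int) : (2 %| a * a - a)%Z.
Proof.
have := divz_eq a 2; set q := (a %/ 2)%Z; set r := (a %% 2)%Z.
have h0 : 0 <= r by apply: modz_ge0.
have h1 : r < 2 by apply: ltz_pmod.
move=> ->; apply/dvdzP.
have [->|->] : r = 0 \/ r = 1 by lia.
  by exists (q * q * 2 - q); ring.
by exists (q * q * 2 + q); ring.
Qed.

Lemma dvd2D (a b : int) : (2 %| a)%Z -> (2 %| b)%Z -> (2 %| a + b)%Z.
Proof. by move=> ha hb; apply: rpredD. Qed.
Lemma dvd2N (a : int) : (2 %| a)%Z -> (2 %| - a)%Z.
Proof. by case/dvdzP=> q ->; apply/dvdzP; exists (- q); rewrite mulNr. Qed.

Lemma char_shift (m m' : V -> int) e (k : Key V) d :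
  (forall w, w != v -> m' w = m w) -> is_char m e k ->
  (2 %| d - (m' v - m v))%Z -> is_char m' e (kshift v k d).
Proof.
move=> hm hk hd x; rewrite kapp_shift (@lform_change m m' e x hm).
have -> : kapp k x + d * x v - (lform m e x x + (m' v - m v) * x v * x v)
  = (kapp k x - lform m e x x) + (d - (m' v - m v)) * x v
    - (m' v - m v) * (x v * x v - x v) by ring.
apply: dvd2D; first apply: dvd2D; first exact: hk.
  exact: dvdz_mulr.
by apply: dvd2N; apply: dvdz_mull; apply: even_sq.
Qed.

Lemma char_par (m : V -> int) e (k : Key V) : is_char m e k -> (2 %| k v - m v)%Z.
Proof.
move=> hk; have := hk (fun w => (w == v)%:Z).
have K1 : kapp k (fun w => (w == v)%:Z) = k v.
  rewrite /kapp (bigD1 v) //= eqxx mulr1 big1 ?addr0 // => w /negbTE ->.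
  by rewrite mulr0.
have L1 : lform m e (fun w => (w == v)%:Z) (fun w => (w == v)%:Z) = m v.
  rewrite /lform (bigD1 v) //=.
  rewrite [X in _ + X]big1; last by move=> a /negbTE ->; apply: big1 => b _; rewrite !mul0r.
  rewrite addr0 (bigD1 v) //= eqxx /pair_vv eqxx big1 ?addr0 ?mul1r //.
  by move=> b /negbTE ->; rewrite mulr0 mul0r.
by rewrite K1 L1.
Qed.

Lemma kapp_ext (W : finType) (k : Key W) (x y : W -> int) :
  (forall w, x w = y w) -> kapp k x = kapp k y.
Proof. by move=> h; apply: eq_bigr => w _; rewrite h. Qed.

Lemma lform_ext (W : finType) m e (x y : W -> int) :
  (forall w, x w = y w) -> lform m e x x = lform m e y y.
Proof. by move=> h; apply: eq_bigr => a _; apply: eq_bigr => b _; rewrite !h. Qed.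

Lemma char_restrict (m : V -> int) e (k : Key V) :
  is_char m e k -> is_char (del_m m v) (del_e e v) (restrict k).
Proof.
move=> hk x'; pose x := fun w : V => if insub w is Some w' then x' w' else 0.
have xv : x v = 0 by rewrite /x insubF // eqxx.
have xw : forall w, x (val w) = x' w by move=> w; rewrite /x valK.
have := hk x; rewrite kapp_split lform_split xv (kapp_ext _ xw) (lform_ext _ _ xw).
by rewrite !mul0r !mulr0 !add0r.
Qed.

Lemma pair_sym (m : V -> int) e a b : symmetric e -> pair_vv m e a b = pair_vv m e b a.
Proof.
move=> se; rewrite /pair_vv eq_sym; case: eqP => [->|_] //.
by rewrite se.
Qed.

Lemma char_ext (m : V -> int) e (k : Key (subv v)) i : symmetric e ->
  is_char (del_m m v) (del_e e v) k -> (2 %| i - m v)%Z -> is_char m e (kext v k i).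
Proof.
move=> se hk hi x; rewrite kapp_split lform_split kext_v restrict_kext.
set S1 := \sum_(b : subv v) _.
set S2 := \sum_(b : subv v) _.
have -> : S2 = S1 by apply: eq_bigr => b _; rewrite pair_sym.
set y := fun w : subv v => x (val w).
have -> : i * x v + kapp k y - (x v * x v * m v + x v * S1 + x v * S1 + lform (del_m m v) (del_e e v) y y)
  = (kapp k y - lform (del_m m v) (del_e e v) y y) + (i - m v) * x v
    - (m v * (x v * x v - x v) + (x v * S1) * 2) by ring.
apply: dvd2D; first apply: dvd2D; first exact: hk.
  exact: dvdz_mulr.
apply: dvd2N; apply: dvd2D; first by apply: dvdz_mull; apply: even_sq.
by apply: dvdz_mull; apply/dvdzP; exists 1; rewrite mul1r.
Qed.

End Keys.

Section Main.
Variable K : fieldType.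
Variable V : finType.
Variables (m : V -> int) (e : rel V) (v : V) (p : nat).
Hypothesis se : symmetric e.
Hypothesis mv : m v = - p%:Z.
Hypothesis p0 : (0 < p)%N.
Hypothesis two : (2 : K) != 0.

Local Notation m1 := (plus1_m m v p).
Local Notation ind := (@ind K _).
Local Notation ksub mm u k := [ffun w => k w - 2 * dualv mm e u w].
Local Notation kadd mm u k := [ffun w => k w + 2 * dualv mm e u w].

Lemma m1v : m1 v = - p%:Z + 1.
Proof. by rewrite /plus1_m eqxx. Qed.
Lemma m1w w : w != v -> m1 w = m w.
Proof. by rewrite /plus1_m => /negbTE ->. Qed.
Lemma m1m : m1 v - m v = 1.
Proof. by rewrite m1v mv; ring. Qed.

Lemma ksub_shift mm u (k : Key V) d : ksub mm u (kshift v k d) = kshift v (ksub mm u k) d.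
Proof. by apply/ffunP => w; rewrite !ffunE; case: ifP => _; ring. Qed.
Lemma kadd_shift mm u (k : Key V) d : kadd mm u (kshift v k d) = kshift v (kadd mm u k) d.
Proof. by apply/ffunP => w; rewrite !ffunE; case: ifP => _; ring. Qed.

Lemma pair_m1 a b : pair_vv m1 e a b = pair_vv m e a b + ((a == v) && (b == v))%:Z.
Proof.
rewrite /pair_vv; case: (eqVneq a b) => [<-|nab].
  case: (eqVneq a v) => [->|nav] /=; first by rewrite m1v mv.
  by rewrite m1w // addr0.
have : ~~ ((a == v) && (b == v)).
  by apply/negP => /andP[/eqP ha /eqP hb]; move: nab; rewrite ha hb eqxx.
by move/negbTE ->; rewrite addr0.
Qed.

Lemma ksub_m1_ne u (k : Key V) : u != v -> ksub m1 u k = ksub m u k.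
Proof. by move=> hu; apply/ffunP => w; rewrite !ffunE pair_m1 (negbTE hu) addr0. Qed.
Lemma kadd_m1_ne u (k : Key V) : u != v -> kadd m1 u k = kadd m u k.
Proof. by move=> hu; apply/ffunP => w; rewrite !ffunE pair_m1 (negbTE hu) addr0. Qed.
Lemma ksub_m1_v (k : Key V) : ksub m1 v k = kshift v (ksub m v k) (-2).
Proof.
apply/ffunP => w; rewrite !ffunE pair_m1 eqxx /=.
by case: (w == v) => /=; ring.
Qed.
Lemma kadd_m1_v (k : Key V) : kadd m1 v k = kshift v (kadd m v k) 2.
Proof.
apply/ffunP => w; rewrite !ffunE pair_m1 eqxx /=.
by case: (w == v) => /=; ring.
Qed.

Lemma ksub_val mm u (k : Key V) w : ksub mm u k w = k w - 2 * pair_vv mm e u w.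
Proof. by rewrite !ffunE. Qed.
Lemma kadd_val mm u (k : Key V) w : kadd mm u k w = k w + 2 * pair_vv mm e u w.
Proof. by rewrite !ffunE. Qed.

Lemma kapp_dual mm (k : Key V) u c x :
  kapp [ffun w => k w + c * dualv mm e u w] x = kapp k x + c * kapp (dualv mm e u) x.
Proof.
rewrite /kapp mulr_sumr -big_split /=; apply: eq_bigr => w _; rewrite ffunE; ring.
Qed.

Lemma char_ksub mm u (k : Key V) : is_char mm e k -> is_char mm e (ksub mm u k).
Proof.
move=> hk x.
have -> : ksub mm u k = [ffun w => k w + (-2) * dualv mm e u w].
  by apply/ffunP => w; rewrite !ffunE; ring.
rewrite kapp_dual.
have -> : kapp k x + -2 * kapp (dualv mm e u) x - lform mm e x x
  = (kapp k x - lform mm e x x) + kapp (dualv mm e u) x * (-1) * 2 by ring.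
by apply: dvd2D; [exact: hk| apply/dvdzP; eexists].
Qed.

Lemma char_kadd mm u (k : Key V) : is_char mm e k -> is_char mm e (kadd mm u k).
Proof.
move=> hk x.
rewrite kapp_dual.
have -> : kapp k x + 2 * kapp (dualv mm e u) x - lform mm e x x
  = (kapp k x - lform mm e x x) + kapp (dualv mm e u) x * 2 by ring.
by apply: dvd2D; [exact: hk| apply/dvdzP; eexists].
Qed.

Lemma char_m_m1 (k : Key V) d : is_char m e k -> (2 %| d - 1)%Z -> is_char m1 e (kshift v k d).
Proof.
move=> hk hd; eapply char_shift; [ | exact: hk | ]; first by move=> w hw; rewrite m1w.
by rewrite m1m.
Qed.
Lemma char_m1_m (k : Key V) d : is_char m1 e k -> (2 %| d + 1)%Z -> is_char m e (kshift v k d).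
Proof.
move=> hk hd; eapply char_shift; [ | exact: hk | ]; first by move=> w hw; rewrite m1w.
have -> : m v - m1 v = -1 by rewrite m1v mv; ring.
by rewrite opprK.
Qed.
Lemma char_m_m (k : Key V) d : is_char m e k -> (2 %| d)%Z -> is_char m e (kshift v k d).
Proof. by move=> hk hd; eapply char_shift; [ | exact: hk | ]; rewrite ?subrr ?subr0. Qed.
Lemma char_m1_m1 (k : Key V) d : is_char m1 e k -> (2 %| d)%Z -> is_char m1 e (kshift v k d).
Proof. by move=> hk hd; eapply char_shift; [ | exact: hk | ]; rewrite ?subrr ?subr0. Qed.

Lemma dvd2E (z : int) : (2 %| z)%Z <-> exists q : int, z = 2 * q.
Proof.
split; first by case/dvdzP => q ->; exists q; ring.
by case=> q ->; apply/dvdzP; exists q; ring.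
Qed.


Lemma coefE (W : finType) (s : comb K W) x : coef s x = \sum_(q <- s) q.1 * ind q.2 x.
Proof. by apply: eq_bigr => q _; rewrite /ind; case: (q.2 == x); rewrite ?mulr1 ?mulr0. Qed.

Lemma cf_map (W : finType) (T : Type) (r : seq T) (c : T -> K) (f : T -> Key W) x :
  coef [seq (c i, f i) | i <- r] x = \sum_(i <- r) c i * ind (f i) x.
Proof. by rewrite coefE big_map. Qed.

Lemma ev_flat (W W' : finType) (g : Key W -> comb K W') (s : comb K W) (G : Key W' -> K) :
  \sum_(q <- flat g s) q.1 * G q.2 = \sum_(q <- s) q.1 * \sum_(y <- g q.2) y.1 * G y.2.
Proof.
rewrite /flat big_flatten big_map; apply: eq_bigr => q _.
by rewrite big_map mulr_sumr; apply: eq_bigr => y _; rewrite mulrA.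
Qed.

Lemma ev_csub (W : finType) (s t : comb K W) (G : Key W -> K) :
  \sum_(q <- csub s t) q.1 * G q.2 = \sum_(q <- s) q.1 * G q.2 - \sum_(q <- t) q.1 * G q.2.
Proof. by rewrite /csub big_cat big_map -sumrN; congr (_ + _); apply: eq_bigr => q _; rewrite mulNr. Qed.

Definition Agen (k' : Key (subv v)) : comb K V := [seq (1, kext v k' i) | i <- Arange p].
Definition Bgen (k : Key V) : comb K V := [:: (-(1/2), kshift v k 1); (1/2, kshift v k (-1))].
Definition cnt (j : int) : nat := if j < p%:Z then (absz (p%:Z - j + 1))./2 else 0%N.
Definition Cgen (k : Key V) : comb K V :=
  [seq (2, kshift v k (1 + 2 * (l%:Z))) | l <- iota 0 (cnt (k v))].
Definition Pd (s : comb K V) := exists t : comb K (subv v),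
  in_free (del_m m v) (del_e e v) t /\ in_rel m e (csub s (mapA v p t)).

Lemma ev_mapA (t : comb K (subv v)) (G : Key V -> K) :
  \sum_(q <- mapA v p t) q.1 * G q.2 = \sum_(q <- t) q.1 * \sum_(y <- Agen q.2) y.1 * G y.2.
Proof.
rewrite /mapA big_flatten big_map; apply: eq_bigr => q _.
by rewrite !big_map mulr_sumr; apply: eq_bigr => y _; rewrite mul1r.
Qed.

Lemma ev_mapB (s : comb K V) (G : Key V -> K) :
  \sum_(q <- mapB v s) q.1 * G q.2 = \sum_(q <- s) q.1 * \sum_(y <- Bgen q.2) y.1 * G y.2.
Proof.
rewrite /mapB big_flatten big_map; apply: eq_bigr => q _.
rewrite /Bgen !big_cons !big_nil /=; ring.
Qed.

Lemma cf_mapA t x : coef (mapA v p t) x = \sum_(q <- t) q.1 * coef (Agen q.2) x.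
Proof.
rewrite coefE (ev_mapA _ (fun y => ind y x)); apply: eq_bigr => q _; by rewrite coefE.
Qed.

Lemma cf_flat' (W : finType) (g : Key W -> comb K V) s x :
  coef (flat g s) x = \sum_(q <- s) q.1 * coef (g q.2) x.
Proof. exact: cf_flat. Qed.

Lemma Pd_rel s : in_rel m e s -> Pd s.
Proof.
move=> hs; exists [::]; split; first by move=> k; rewrite cf_nil eqxx.
apply: (P_ext (@in_rel_lin K V m e) hs) => k.
by rewrite cf_csub cf_mapA big_nil subr0.
Qed.

Lemma Pd_A k' : is_char (del_m m v) (del_e e v) k' -> Pd (Agen k').
Proof.
move=> hk; exists [:: (1, k')]; split.
  move=> x; rewrite cf_cons cf_nil addr0 mul1r /ind; case: ifP => [/eqP <- //|_]; by rewrite eqxx.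
apply: (P_ext (@in_rel_lin K V m e) (P_nil (@in_rel_lin K V m e))) => x.
by rewrite cf_csub cf_mapA cf_nil big_cons big_nil addr0 mul1r subrr.
Qed.

Lemma sum_neq0 (T : eqType) (r : seq T) (F : T -> K) :
  \sum_(i <- r) F i != 0 -> exists2 i, i \in r & F i != 0.
Proof.
elim: r => [|a r IH]; first by rewrite big_nil eqxx.
rewrite big_cons; case: (eqVneq (F a) 0) => [->|ha]; last by move=> _; exists a; rewrite ?mem_head.
by rewrite add0r => /IH [i hi hF]; exists i; rewrite // inE hi orbT.
Qed.

Lemma Pd_lin : lin Pd.
Proof.
move=> L s HL Hs.
suff [t [H1 H2]] : Pd (combL L).
  exists t; split => //; apply: (P_ext (@in_rel_lin K V m e) H2) => k.
  by rewrite !cf_csub Hs cf_combL.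
elim: L HL {Hs} => [|[c r] L IH] HL.
  exists [::]; split; first by move=> k; rewrite cf_nil eqxx.
  apply: (P_ext (@in_rel_lin K V m e) (P_nil (@in_rel_lin K V m e))) => k.
  by rewrite cf_csub /combL /mapA /= cf_nil subr0.
have [tr [Hr1 Hr2]] := HL (c, r) (mem_head _ _).
have [t' [H1 H2]] : Pd (combL L).
  by apply: IH => q hq; apply: HL; rewrite inE hq orbT.
exists ([seq (c * y.1, y.2) | y <- tr] ++ t'); split.
  move=> k; rewrite cf_cat cf_scale => hk.
  case: (eqVneq (coef tr k) 0) => [h0|]; first by apply: H1; move: hk; rewrite h0 mulr0 add0r.
  by move=> /Hr1.
apply: (in_rel_lin (L := [:: (c, csub r (mapA v p tr)); (1, csub (combL L) (mapA v p t'))])).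
  by move=> q; rewrite !inE => /orP[] /eqP -> /=.
move=> k; rewrite big_cons big_cons big_nil !cf_csub !cf_combL big_cons.
rewrite !cf_mapA big_cat big_map /=.
have -> : \sum_(j <- tr) c * j.1 * coef (Agen j.2) k = c * \sum_(q <- tr) q.1 * coef (Agen q.2) k.
  by rewrite mulr_sumr; apply: eq_bigr => q _; rewrite mulrA.
ring.
Qed.


Lemma lin1 (W : finType) (P : comb K W -> Prop) c1 s1 s : lin P -> P s1 ->
  (forall k, coef s k = c1 * coef s1 k) -> P s.
Proof.
move=> hP h1 hs; apply: (hP [:: (c1, s1)]); first by move=> q; rewrite inE => /eqP->.
by move=> k; rewrite hs big_cons big_nil addr0.
Qed.

Lemma lin2 (W : finType) (P : comb K W -> Prop) c1 s1 c2 s2 s : lin P -> P s1 -> P s2 ->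
  (forall k, coef s k = c1 * coef s1 k + c2 * coef s2 k) -> P s.
Proof.
move=> hP h1 h2 hs; apply: (hP [:: (c1, s1); (c2, s2)]).
  by move=> q; rewrite !inE => /orP[] /eqP->.
by move=> k; rewrite hs !big_cons big_nil addr0.
Qed.

Lemma lin3 (W : finType) (P : comb K W -> Prop) c1 s1 c2 s2 c3 s3 s : lin P -> P s1 -> P s2 -> P s3 ->
  (forall k, coef s k = c1 * coef s1 k + c2 * coef s2 k + c3 * coef s3 k) -> P s.
Proof.
move=> hP h1 h2 h3 hs; apply: (hP [:: (c1, s1); (c2, s2); (c3, s3)]).
  by move=> q; rewrite !inE => /orP[/eqP->|/orP[] /eqP->].
by move=> k; rewrite hs !big_cons big_nil addr0 addrA.
Qed.

Lemma linsum (W : finType) (T : eqType) (P : comb K W -> Prop) (r : seq T) (c : T -> K)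
  (f : T -> comb K W) s : lin P -> (forall i, i \in r -> P (f i)) ->
  (forall k, coef s k = \sum_(i <- r) c i * coef (f i) k) -> P s.
Proof.
move=> hP hf hs; apply: (hP [seq (c i, f i) | i <- r]).
  by move=> q /mapP[i hi ->]; apply: hf.
by move=> k; rewrite hs big_map.
Qed.

Lemma rel1 mm (r : comb K V) : basic_rel mm e r -> in_rel mm e r.
Proof.
move=> hr; exists [:: (1, r)]; split.
  by move=> q; rewrite inE => /eqP->.
by move=> k; rewrite big_cons big_nil addr0 mul1r.
Qed.

Lemma relI mm (k : Key V) u : is_char mm e k -> - mm u < `|k u| -> @in_rel K V mm e [:: (1, k)].
Proof. by move=> hk hu; apply: rel1; exists k, u; split => //; left. Qed.

Lemma relIIs mm (k : Key V) u : is_char mm e k -> k u = mm u ->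
  @in_rel K V mm e [:: (1, k); (-((-1) ^ (mm u)), ksub mm u k)].
Proof. by move=> hk hu; apply: rel1; exists k, u; split => //; right; left. Qed.

Lemma relIIa mm (k : Key V) u : is_char mm e k -> k u = - mm u ->
  @in_rel K V mm e [:: (1, k); (-((-1) ^ (mm u)), kadd mm u k)].
Proof. by move=> hk hu; apply: rel1; exists k, u; split => //; right; right. Qed.

Lemma sgnS (z : int) : (-1 : K) ^ (z + 1) = - (-1) ^ z.
Proof. by rewrite expfzDr ?oppr_eq0 ?oner_eq0 // expr1z mulrN1. Qed.

Lemma sgn2 (z : int) : (-1 : K) ^ z * (-1) ^ z = 1.
Proof.
rewrite -expfzDr ?oppr_eq0 ?oner_eq0 //.
have -> : z + z = z * 2 by rewrite mulrDr mulr1 -/(2 : int) ; done.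
rewrite -exprz_exp exprzAC.
have -> : (-1 : K) ^ (2%:Z) = 1 by change ((-1 : K) ^+ 2 = 1); by rewrite expr2 mulrNN mulr1.
exact: exp1rz.
Qed.


Lemma kshift_ne (k : Key V) d u : u != v -> kshift v k d u = k u.
Proof. by move=> hu; rewrite /kshift ffunE (negbTE hu). Qed.

Lemma m1vS : m1 v = m v + 1.
Proof. by rewrite m1v mv. Qed.

Lemma cf_Bgen k x : coef (Bgen k) x = -(1/2) * ind (kshift v k 1) x + (1/2) * ind (kshift v k (-1)) x.
Proof. by rewrite /Bgen !cf_cons cf_nil addr0. Qed.

Lemma cf1 (W : finType) (k : Key W) x : coef [:: (1 : K, k)] x = ind k x.
Proof. by rewrite cf_cons cf_nil addr0 mul1r. Qed.

Lemma cf2 (W : finType) (a b : Key W) (c : K) x : coef [:: (1 : K, a); (c, b)] x = ind a x + c * ind b x.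
Proof. by rewrite !cf_cons cf_nil addr0 mul1r. Qed.

Lemma B_rel (r : comb K V) : basic_rel m e r -> in_rel m1 e (flat Bgen r).
Proof.
have LR := @in_rel_lin K V m1 e.
case=> k [u [hk [[hu ->]|[[hu ->]|[hu ->]]]]].
- have hkp : is_char m1 e (kshift v k 1) by apply: char_m_m1 => //; rewrite subrr; apply/dvdzP; exists 0.
  have hkm : is_char m1 e (kshift v k (-1)) by apply: char_m_m1 => //; apply/dvdzP; exists (-1).
  apply: (lin2 (c1 := -(1/2)) (s1 := [:: (1, kshift v k 1)]) (c2 := 1/2) (s2 := [:: (1, kshift v k (-1))])) => //.
  + apply: (relI (u := u) hkp); case: (eqVneq u v) hu => [->|hne] hu; first by rewrite kshift_v m1v; move: hu; rewrite mv; lia.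
    by rewrite kshift_ne // m1w.
  + apply: (relI (u := u) hkm); case: (eqVneq u v) hu => [->|hne] hu; first by rewrite kshift_v m1v; move: hu; rewrite mv; lia.
    by rewrite kshift_ne // m1w.
  + by move=> x; rewrite cf_flat !big_cons big_nil /= cf_Bgen !cf1; ring.
- case: (eqVneq u v) => [huv|hne].
  + subst u.
    have hkp : is_char m1 e (kshift v k 1) by apply: char_m_m1 => //; rewrite subrr; apply/dvdzP; exists 0.
    have hkm : is_char m1 e (kshift v k (-1)) by apply: char_m_m1 => //; apply/dvdzP; exists (-1).
    have hK : is_char m1 e (kshift v (ksub m v k) 1).
      by apply: char_m_m1; [exact: char_ksub| rewrite subrr; apply/dvdzP; exists 0].
    have R3 := relIIs (u := v) hkp.
    rewrite ksub_shift ksub_m1_v kshiftD kshift_v hu m1vS in R3.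
    rewrite (_ : (-2 + 1 : int) = -1) // in R3.
    move: R3 => /(_ erefl) R3.
    apply: (lin3 (c1 := -(1/2)) (c2 := 1/2) (c3 := (1/2) * (-1) ^ (m v)) LR R3
             (s2 := [:: (1, kshift v k (-1))]) (s3 := [:: (1, kshift v (ksub m v k) 1)])).
    * apply: (relI (u := v) hkm); rewrite kshift_v m1v hu mv; lia.
    * apply: (relI (u := v) hK); rewrite kshift_v ksub_val /pair_vv eqxx m1v hu mv; lia.
    * move=> x; rewrite cf_flat !big_cons big_nil /= !cf_Bgen !cf1 cf2 sgnS; ring.
  + have hkp : is_char m1 e (kshift v k 1) by apply: char_m_m1 => //; rewrite subrr; apply/dvdzP; exists 0.
    have hkm : is_char m1 e (kshift v k (-1)) by apply: char_m_m1 => //; apply/dvdzP; exists (-1).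
    have R1 := relIIs (u := u) hkp; have R2 := relIIs (u := u) hkm.
    rewrite ksub_m1_ne // ksub_shift m1w // kshift_ne // in R1.
    rewrite ksub_m1_ne // ksub_shift m1w // kshift_ne // in R2.
    move: R1 R2 => /(_ hu) R1 /(_ hu) R2.
    apply: (lin2 (c1 := -(1/2)) (c2 := 1/2) LR R1 R2).
    by move=> x; rewrite cf_flat !big_cons big_nil /= !cf_Bgen !cf2; ring.
- case: (eqVneq u v) => [huv|hne].
  + subst u.
    have hkp : is_char m1 e (kshift v k 1) by apply: char_m_m1 => //; rewrite subrr; apply/dvdzP; exists 0.
    have hkm : is_char m1 e (kshift v k (-1)) by apply: char_m_m1 => //; apply/dvdzP; exists (-1).
    have hK : is_char m1 e (kshift v (kadd m v k) (-1)).
      by apply: char_m_m1; [exact: char_kadd| apply/dvdzP; exists (-1)].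
    have R3 := relIIa (u := v) hkm.
    rewrite kadd_shift kadd_m1_v kshiftD kshift_v hu m1vS in R3.
    rewrite (_ : (2 - 1 : int) = 1) // in R3.
    have e1 : - m v - 1 = - (m v + 1) by ring.
    move: R3 => /(_ e1) R3.
    apply: (lin3 (c1 := -(1/2)) (c2 := 1/2) (c3 := -(1/2) * (-1) ^ (m v))
             (s1 := [:: (1, kshift v k 1)]) LR _ R3 (s3 := [:: (1, kshift v (kadd m v k) (-1))])).
    * apply: (relI (u := v) hkp); rewrite kshift_v m1v hu mv; lia.
    * apply: (relI (u := v) hK); rewrite kshift_v kadd_val /pair_vv eqxx m1v hu mv; lia.
    * move=> x; rewrite cf_flat !big_cons big_nil /= !cf_Bgen !cf1 cf2 sgnS; ring.
  + have hkp : is_char m1 e (kshift v k 1) by apply: char_m_m1 => //; rewrite subrr; apply/dvdzP; exists 0.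
    have hkm : is_char m1 e (kshift v k (-1)) by apply: char_m_m1 => //; apply/dvdzP; exists (-1).
    have R1 := relIIa (u := u) hkp; have R2 := relIIa (u := u) hkm.
    rewrite kadd_m1_ne // kadd_shift m1w // kshift_ne // in R1.
    rewrite kadd_m1_ne // kadd_shift m1w // kshift_ne // in R2.
    move: R1 R2 => /(_ hu) R1 /(_ hu) R2.
    apply: (lin2 (c1 := -(1/2)) (c2 := 1/2) LR R1 R2).
    by move=> x; rewrite cf_flat !big_cons big_nil /= !cf_Bgen !cf2; ring.
Qed.


Lemma tele (f : nat -> K) n : \sum_(j <- iota 0 n) (f j - f j.+1) = f 0%N - f n.
Proof.
elim: n => [|n IH]; first by rewrite big_nil subrr.
rewrite -addn1 iotaD big_cat big_seq1 IH add0n addn1 /=; ring.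
Qed.

Lemma char_kext_m k' i : is_char (del_m m v) (del_e e v) k' -> (2 %| i - p%:Z)%Z ->
  is_char m e (kext v k' i).
Proof.
move=> hk hi; apply: char_ext => //.
by move: hi => /dvd2E [q hq]; apply/dvd2E; exists (q + p%:Z); rewrite mv; lia.
Qed.

Lemma BA k' : is_char (del_m m v) (del_e e v) k' -> in_rel m1 e (flat Bgen (Agen k')).
Proof.
move=> hk.
have c1 : is_char m1 e (kext v k' (- p%:Z - 1)).
  rewrite -kshift_kext; apply: char_m_m1.
    by apply: char_kext_m => //; apply/dvdzP; exists (- p%:Z); ring.
  by apply/dvdzP; exists (-1).
have c2 : is_char m1 e (kext v k' (p%:Z + 1)).
  rewrite -kshift_kext; apply: char_m_m1.
    by apply: char_kext_m => //; rewrite subrr; apply/dvdzP; exists 0.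
  by rewrite subrr; apply/dvdzP; exists 0.
apply: (lin2 (c1 := 1/2) (c2 := -(1/2)) (@in_rel_lin K V m1 e)
   (relI (u := v) c1 _) (relI (u := v) c2 _)).
- by rewrite kext_v m1v; lia.
- by rewrite kext_v m1v; lia.
move=> x; rewrite cf_flat /Agen big_map /Arange big_map !cf1.
pose f := fun j : nat => ind (kext v k' (- p%:Z - 1 + 2 * j%:Z)) x.
rewrite (eq_bigr (fun j => (1/2) * (f j - f j.+1))); last first.
  move=> j _; rewrite /= cf_Bgen !kshift_kext /f.
  rewrite (_ : - p%:Z + 2 * j%:Z + 1 = - p%:Z - 1 + 2 * (j.+1)%:Z); last by lia.
  rewrite (_ : - p%:Z + 2 * j%:Z + -1 = - p%:Z - 1 + 2 * j%:Z); last by lia.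
  ring.
rewrite -mulr_sumr tele /f.
rewrite (_ : - p%:Z - 1 + 2 * (0%N)%:Z = - p%:Z - 1); last by lia.
rewrite (_ : - p%:Z - 1 + 2 * (p.+1)%:Z = p%:Z + 1); last by lia.
ring.
Qed.


Lemma cnt_ge j : p%:Z <= j -> cnt j = 0%N.
Proof. by rewrite /cnt => h; rewrite ltNge h. Qed.

Lemma cnt_val j q : j = p%:Z - 1 - 2 * q%:Z -> cnt j = q.+1.
Proof.
move=> ->; rewrite /cnt ifT; last by lia.
have -> : absz (p%:Z - (p%:Z - 1 - 2 * q%:Z) + 1) = (q.+1).*2 by lia.
by rewrite doubleK.
Qed.

Lemma cnt_val2 j q : j = p%:Z + 1 - 2 * q%:Z -> cnt j = q.
Proof.
case: q => [|q] ->; first by rewrite cnt_ge //; lia.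
by apply: cnt_val; lia.
Qed.

Lemma cnt_bound j : p%:Z <= j + 2 * (cnt j)%:Z.
Proof.
rewrite /cnt; case: ifP => h; last by lia.
have := odd_double_half (absz (p%:Z - j + 1)); have := leq_b1 (odd (absz (p%:Z - j + 1))).
lia.
Qed.

Lemma cf_Cgen k x : coef (Cgen k) x = \sum_(l <- iota 0 (cnt (k v))) 2 * ind (kshift v k (1 + 2 * l%:Z)) x.
Proof. by rewrite /Cgen cf_map. Qed.

Lemma sum_iota_shift (F : nat -> K) a n :
  \sum_(l <- iota a.+1 n) F l = \sum_(l <- iota a n) F l.+1.
Proof.
elim: n a => [|n IH] a; first by rewrite !big_nil.
by rewrite /= !big_cons IH.
Qed.

Lemma sum_iotaS (F : nat -> K) n :
  \sum_(l <- iota 0 n.+1) F l = F 0%N + \sum_(l <- iota 0 n) F l.+1.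
Proof. by rewrite /= big_cons sum_iota_shift. Qed.

Lemma sum_iotaSr (F : nat -> K) n :
  \sum_(l <- iota 0 n.+1) F l = \sum_(l <- iota 0 n) F l + F n.
Proof. by rewrite -addn1 iotaD big_cat big_seq1 add0n. Qed.

Lemma BC k : is_char m1 e k -> in_rel m1 e (csub [:: (1, k)] (flat Bgen (Cgen k))).
Proof.
move=> hk; set n := cnt (k v).
have hc : is_char m1 e (kshift v k (2 * n%:Z)) by apply: char_m1_m1 => //; apply/dvd2E; exists n%:Z.
apply: (lin1 (c1 := 1) (@in_rel_lin K V m1 e) (relI (u := v) hc _)).
  by rewrite kshift_v m1v; have := cnt_bound (k v); rewrite -/n; lia.
move=> x; rewrite cf_csub cf1 cf_flat /Cgen big_map cf1.
pose g := fun l : nat => ind (kshift v k (2 * l%:Z)) x.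
rewrite (eq_bigr (fun l => g l - g l.+1)); last first.
  move=> l _; rewrite /= cf_Bgen !kshiftD /g.
  rewrite (_ : 1 + 2 * l%:Z + 1 = 2 * (l.+1)%:Z); last by lia.
  rewrite (_ : 1 + 2 * l%:Z + -1 = 2 * l%:Z); last by lia.
  by field; exact: two.
rewrite (tele g) /g mulr0 kshift0; ring.
Qed.

Lemma CB k : is_char m e k -> Pd (csub [:: (1, k)] (flat Cgen (Bgen k))).
Proof.
move=> hk; move: (@char_par V v m e k hk) => /dvd2E [z hz].
have LP := Pd_lin.
case: (ltP p%:Z (k v)) => hkv.
  apply: (lin1 (c1 := 1) LP (Pd_rel (relI (u := v) hk _))); first by rewrite mv; lia.
  move=> x; rewrite cf_csub cf1 cf_flat !big_cons big_nil /= !cf_Cgen !kshift_v.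
  by rewrite !cnt_ge ?big_nil; [ring|lia|lia].
have [q hq] : exists q : nat, k v = p%:Z - 2 * q%:Z by exists (absz (p%:Z - z)); lia.
apply: (P_ext LP (P_nil LP)) => x.
rewrite cf_csub cf1 cf_flat !big_cons big_nil /= !cf_Cgen !kshift_v cf_nil.
rewrite (@cnt_val2 _ q); last by lia.
rewrite (@cnt_val _ q); last by lia.
rewrite sum_iotaS.
have -> : \sum_(l <- iota 0 q) 2 * ind (kshift v (kshift v k (-1)) (1 + 2 * (l.+1)%:Z)) x
    = \sum_(l <- iota 0 q) 2 * ind (kshift v (kshift v k 1) (1 + 2 * l%:Z)) x.
  apply: eq_bigr => l _; rewrite !kshiftD.
  by rewrite (_ : -1 + (1 + 2 * (l.+1)%:Z) = 1 + (1 + 2 * l%:Z)) //; lia.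
rewrite kshiftD (_ : -1 + (1 + 2 * (0%N)%:Z) = 0) ?kshift0; last by lia.
by field; exact: two.
Qed.



Lemma lin_s0 (P : comb K V -> Prop) (T : eqType) (r : seq T) (c : K) (f : T -> comb K V) s :
  lin P -> (forall i, i \in r -> P (f i)) ->
  (forall k, coef s k = c * \sum_(i <- r) coef (f i) k) -> P s.
Proof.
move=> hP hf hs; apply: (linsum (c := fun _ => c) hP hf) => k.
by rewrite hs mulr_sumr.
Qed.

Lemma lin_s1 (P : comb K V -> Prop) (T : eqType) (r : seq T) (c : K) (f : T -> comb K V) c1 s1 s :
  lin P -> (forall i, i \in r -> P (f i)) -> P s1 ->
  (forall k, coef s k = c * \sum_(i <- r) coef (f i) k + c1 * coef s1 k) -> P s.
Proof.
move=> hP hf h1 hs.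
have h0 : P (combL [seq (c, f i) | i <- r]).
  by apply: (lin_s0 (c := c) hP hf) => k; rewrite cf_combL big_map mulr_sumr.
apply: (lin2 (c1 := 1) hP h0 h1) => k.
by rewrite hs cf_combL big_map mulr_sumr mul1r.
Qed.

Lemma lin_s2 (P : comb K V -> Prop) (T : eqType) (r : seq T) (c : K) (f : T -> comb K V) c1 s1 c2 s2 s :
  lin P -> (forall i, i \in r -> P (f i)) -> P s1 -> P s2 ->
  (forall k, coef s k = c * \sum_(i <- r) coef (f i) k + c1 * coef s1 k + c2 * coef s2 k) -> P s.
Proof.
move=> hP hf h1 h2 hs.
have h0 : P (combL [seq (c, f i) | i <- r]).
  by apply: (lin_s0 (c := c) hP hf) => k; rewrite cf_combL big_map mulr_sumr.
apply: (lin3 (c1 := 1) hP h0 h1 h2) => k.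
by rewrite hs cf_combL big_map mulr_sumr mul1r.
Qed.

Lemma flat1 (k : Key V) x : coef (flat Cgen [:: (1, k)]) x = coef (Cgen k) x.
Proof. by rewrite cf_flat big_cons big_nil /= mul1r addr0. Qed.

Lemma flat2 (k k' : Key V) c x : coef (flat Cgen [:: (1, k); (c, k')]) x = coef (Cgen k) x + c * coef (Cgen k') x.
Proof. by rewrite cf_flat !big_cons big_nil /= mul1r addr0. Qed.

Lemma sumC2 (T : Type) (r : seq T) (F : T -> K) : \sum_(i <- r) 2 * F i = 2 * \sum_(i <- r) F i.
Proof. by rewrite mulr_sumr. Qed.

Lemma hkl k : is_char m1 e k -> forall l : nat, is_char m e (kshift v k (1 + 2 * l%:Z)).
Proof. by move=> hk l; apply: char_m1_m => //; apply/dvd2E; exists (1 + l%:Z); ring. Qed.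

Lemma cfA k' x : coef (Agen k') x = \sum_(j <- iota 0 p.+1) ind (kext v k' (- p%:Z + 2 * j%:Z)) x.
Proof. by rewrite /Agen /Arange cf_map big_map; apply: eq_bigr => j _; rewrite mul1r. Qed.

Lemma CR_I k u : is_char m1 e k -> - m1 u < `|k u| -> Pd (flat Cgen [:: (1, k)]).
Proof.
move=> hk hu; have LP := Pd_lin.
case: (eqVneq u v) hu => [-> hu|hne hu]; last first.
  apply: (lin_s0 (r := iota 0 (cnt (k v))) (c := 2) (f := fun l => [:: (1, kshift v k (1 + 2 * l%:Z))]) LP).
    move=> l _; apply: Pd_rel; apply: (relI (u := u) (hkl hk l)).
    by rewrite kshift_ne // -(m1w hne).
  by move=> x; rewrite flat1 cf_Cgen sumC2; congr (_ * _); apply: eq_bigr => l _; rewrite cf1.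
move: (@char_par V v m1 e k hk) => /dvd2E [z hz]; rewrite m1v in hz hu.
case: (lerP p%:Z (k v)) => hkv.
  apply: (P_ext LP (P_nil LP)) => x.
  by rewrite flat1 cf_Cgen cnt_ge // big_nil cf_nil.
have [a ha] : exists a : nat, k v = - p%:Z - 1 - 2 * a%:Z by exists (absz (- z - 1)); lia.
apply: (lin_s1 (r := iota 0 a) (c := 2) (f := fun l => [:: (1, kshift v k (1 + 2 * l%:Z))])
          (c1 := 2) (s1 := Agen (restrict v k)) LP).
- move=> l; rewrite mem_iota => /andP[_ hl]; apply: Pd_rel; apply: (relI (u := v) (hkl hk l)).
  by rewrite kshift_v mv; lia.
- apply: Pd_A; rewrite -(restrict_kshift v k 1); apply: char_restrict.
  by apply: char_m1_m => //; apply/dvd2E; exists 1.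
move=> x; rewrite flat1 cf_Cgen (@cnt_val _ (p + a)); last by lia.
rewrite (_ : (p + a).+1 = a + p.+1)%N; last by lia.
rewrite iotaD big_cat add0n sumC2 cfA; congr (_ + _).
  by congr (_ * _); apply: eq_bigr => l _; rewrite cf1.
have -> : iota a p.+1 = map (addn a) (iota 0 p.+1) by rewrite -iotaDl addn0.
rewrite big_map sumC2; congr (_ * _); apply: eq_bigr => j _.
rewrite kext_restrict; congr (ind _ x); congr (kshift v k _); lia.
Qed.


Lemma CR_IIs_v k : is_char m1 e k -> k v = m1 v ->
  Pd (flat Cgen [:: (1, k); (-((-1) ^ (m1 v)), ksub m1 v k)]).
Proof.
move=> hk hu; have LP := Pd_lin.
have hkv : k v = - p%:Z + 1 by rewrite hu m1v.
have hKv : ksub m1 v k v = p%:Z - 1 by rewrite ksub_val /pair_vv eqxx hkv m1v; ring.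
have hk0 : is_char m e (kshift v k (-1)) by apply: char_m1_m => //; apply/dvd2E; exists 0.
have hk0v : kshift v k (-1) v = m v by rewrite kshift_v hkv mv; ring.
have R := relIIs (u := v) hk0 hk0v; rewrite ksub_shift in R.
have hA : Pd (Agen (restrict v k)).
  by apply: Pd_A; rewrite -(restrict_kshift v k (-1)); apply: char_restrict.
apply: (lin2 (c1 := 2) (c2 := -2) LP hA (Pd_rel R)).
move=> x; rewrite flat2 !cf_Cgen hKv (@cnt_val (p%:Z - 1) 0); last by lia.
rewrite (@cnt_val (k v) p.-1); last by rewrite -subn1; lia.
rewrite prednK // [iota 0 1]/= big_cons big_nil cfA sum_iotaS cf2.
rewrite ksub_m1_v kshiftD (_ : -2 + (1 + 2 * (0%N)%:Z) = -1) //.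
rewrite kext_restrict (_ : - p%:Z + 2 * (0%N)%:Z - k v = -1); last by lia.
rewrite m1vS sgnS sumC2.
have -> : \sum_(j <- iota 0 p) ind (kext v (restrict v k) (- p%:Z + 2 * (j.+1)%:Z)) x
   = \sum_(l <- iota 0 p) ind (kshift v k (1 + 2 * l%:Z)) x.
  apply: eq_bigr => l _; rewrite kext_restrict; congr (ind (kshift v k _) x); lia.
ring.
Qed.


Lemma sq_fix (s t a b : K) : s * s = 1 -> a = b + (1 - s * s) * t -> a = b.
Proof. by move=> h ->; rewrite h subrr mul0r addr0. Qed.

Lemma ksub_kadd_m1 (k : Key V) : ksub m v (kadd m1 v k) = kshift v k 2.
Proof.
apply/ffunP => w; rewrite !ffunE pair_m1 eqxx /=.
by case: (w == v) => /=; ring.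
Qed.

Lemma CR_IIa_v k : is_char m1 e k -> k v = - m1 v ->
  Pd (flat Cgen [:: (1, k); (-((-1) ^ (m1 v)), kadd m1 v k)]).
Proof.
move=> hk hu; have LP := Pd_lin.
have hkv : k v = p%:Z - 1 by rewrite hu m1v; ring.
have hKv : kadd m1 v k v = - p%:Z + 1 by rewrite kadd_val /pair_vv eqxx hkv m1v; ring.
have hK : is_char m1 e (kadd m1 v k) by apply: char_kadd.
have hK0 : is_char m e (kshift v (kadd m1 v k) (-1)) by apply: char_m1_m => //; apply/dvd2E; exists 0.
have hK0v : kshift v (kadd m1 v k) (-1) v = m v by rewrite kshift_v hKv mv; ring.
have R := relIIs (u := v) hK0 hK0v; rewrite ksub_shift ksub_kadd_m1 kshiftD in R.
rewrite (_ : (2 + -1 : int) = 1) // in R.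
have hA : Pd (Agen (restrict v (kadd m1 v k))).
  by apply: Pd_A; rewrite -(restrict_kshift v _ (-1)); apply: char_restrict.
apply: (lin2 (c1 := 2 * (-1) ^ (m v)) (c2 := -2 * (-1) ^ (m v)) LP hA (Pd_rel R)).
move=> x; rewrite flat2 !cf_Cgen hKv hkv (@cnt_val (p%:Z - 1) 0); last by lia.
rewrite (@cnt_val (- p%:Z + 1) p.-1); last by rewrite -subn1; lia.
rewrite prednK // [iota 0 1]/= big_cons big_nil cfA sum_iotaS cf2.
rewrite (_ : 1 + 2 * (0%N)%:Z = 1) //.
rewrite kext_restrict hKv (_ : - p%:Z + 2 * (0%N)%:Z - (- p%:Z + 1) = -1); last by lia.
rewrite m1vS sgnS !sumC2.
have -> : \sum_(j <- iota 0 p) ind (kext v (restrict v (kadd m1 v k)) (- p%:Z + 2 * (j.+1)%:Z)) x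
   = \sum_(l <- iota 0 p) ind (kshift v (kadd m1 v k) (1 + 2 * l%:Z)) x.
  apply: eq_bigr => l _; rewrite kext_restrict hKv; congr (ind (kshift v _ _) x); lia.
apply: (sq_fix (s := (-1) ^ (m v)) (t := 2 * ind (kshift v k 1) x) (sgn2 _)); ring.
Qed.


Lemma CR_IIs_u k u : is_char m1 e k -> u != v -> k u = m1 u ->
  Pd (flat Cgen [:: (1, k); (-((-1) ^ (m1 u)), ksub m1 u k)]).
Proof.
move=> hk hne hu; have LP := Pd_lin.
rewrite ksub_m1_ne // m1w //; rewrite m1w // in hu.
pose c : K := -((-1) ^ (m u)).
pose f := fun l : nat => [:: (1, kshift v k (1 + 2 * l%:Z)); (c, kshift v (ksub m u k) (1 + 2 * l%:Z))].
have hf : forall l, Pd (f l).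
  move=> l; apply: Pd_rel; have := relIIs (u := u) (hkl hk l); rewrite ksub_shift; apply.
  by rewrite kshift_ne.
have hKv : ksub m u k v = k v - 2 * (if e u v then -1 else 0) by rewrite ksub_val /pair_vv (negbTE hne).
have hKc : is_char m1 e (ksub m u k) by rewrite -ksub_m1_ne //; apply: char_ksub.
case he: (e u v) in hKv.
  move: hKv; rewrite (_ : k v - 2 * -1 = k v + 2) ?mulr0 ?subr0; last by ring.
  move=> hKv.
  move: (@char_par V v m1 e k hk) => /dvd2E [z hz]; rewrite m1v in hz.
  case: (lerP p%:Z (k v)) => hkv.
    apply: (P_ext LP (P_nil LP)) => x.
    by rewrite flat2 !cf_Cgen hKv !cnt_ge ?big_nil ?cf_nil ?mulr0 ?addr0 //; lia.
  have [q hq] : exists q : nat, k v = p%:Z - 1 - 2 * q%:Z by exists (absz (p%:Z - 1 - z)%R); lia.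
  have hT : is_char m e (kshift v (ksub m u k) (1 + 2 * q%:Z)).
    by apply: char_m1_m => //; apply/dvd2E; exists (1 + q%:Z); ring.
  apply: (lin_s1 (r := iota 0 q.+1) (c := 2) (f := f) (c1 := -2 * c)
            (s1 := [:: (1, kshift v (ksub m u k) (1 + 2 * q%:Z))]) LP).
  - by move=> l _; apply: hf.
  - by apply: Pd_rel; apply: (relI (u := v) hT); rewrite kshift_v hKv mv; lia.
  move=> x; rewrite flat2 !cf_Cgen hKv (@cnt_val (k v) q) // (@cnt_val2 (k v + 2) q); last by lia.
  rewrite cf1 /f; under [X in _ = 2 * X + _]eq_bigr => l _ do rewrite cf2.
  rewrite !sum_iotaSr big_split /= -[\sum_(i <- _) c * _]mulr_sumr !sumC2; rewrite /c; ring.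
apply: (lin_s0 (r := iota 0 (cnt (k v))) (c := 2) (f := f) LP) => [l _|x]; first exact: hf.
rewrite flat2 !cf_Cgen hKv mulr0 subr0 /f.
under [X in _ = 2 * X]eq_bigr => l _ do rewrite cf2.
rewrite big_split /= -[\sum_(i <- _) c * _]mulr_sumr !sumC2 /c; ring.
Qed.


Lemma CR_IIa_u k u : is_char m1 e k -> u != v -> k u = - m1 u ->
  Pd (flat Cgen [:: (1, k); (-((-1) ^ (m1 u)), kadd m1 u k)]).
Proof.
move=> hk hne hu; have LP := Pd_lin.
rewrite kadd_m1_ne // m1w //; rewrite m1w // in hu.
pose c : K := -((-1) ^ (m u)).
pose f := fun l : nat => [:: (1, kshift v k (1 + 2 * l%:Z)); (c, kshift v (kadd m u k) (1 + 2 * l%:Z))].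
have hf : forall l, Pd (f l).
  move=> l; apply: Pd_rel; have := relIIa (u := u) (hkl hk l); rewrite kadd_shift; apply.
  by rewrite kshift_ne.
have hKv : kadd m u k v = k v + 2 * (if e u v then -1 else 0) by rewrite kadd_val /pair_vv (negbTE hne).
have hKc : is_char m1 e (kadd m u k) by rewrite -kadd_m1_ne //; apply: char_kadd.
case he: (e u v) in hKv.
  move: hKv; rewrite (_ : k v + 2 * -1 = k v - 2); last by ring.
  move=> hKv.
  move: (@char_par V v m1 e k hk) => /dvd2E [z hz]; rewrite m1v in hz.
  case: (lerP p%:Z (k v - 2)) => hkv.
    apply: (P_ext LP (P_nil LP)) => x.
    by rewrite flat2 !cf_Cgen hKv !cnt_ge ?big_nil ?cf_nil ?mulr0 ?addr0 //; lia.
  have [q hq] : exists q : nat, k v - 2 = p%:Z - 1 - 2 * q%:Z by exists (absz (p%:Z - z)%R); lia.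
  set T := kshift v (kadd m u k) (1 + 2 * q%:Z).
  have hT : is_char m e T by apply: char_m1_m => //; apply/dvd2E; exists (1 + q%:Z); ring.
  have hTu : T u = m u by rewrite /T kshift_ne // kadd_val /pair_vv eqxx hu; ring.
  have hT' : is_char m e (ksub m u T) by apply: char_ksub.
  have RT := relIIs (u := u) hT hTu.
  have hT'v : ksub m u T v = p%:Z + 2.
    by rewrite ksub_val /pair_vv (negbTE hne) he /T kshift_v hKv; lia.
  apply: (lin_s2 (r := iota 0 q) (c := 2) (f := f) (c1 := 2 * c) (c2 := 2 * c * (-1) ^ (m u))
            (s2 := [:: (1, ksub m u T)]) LP _ (Pd_rel RT)).
  - by move=> l _; apply: hf.
  - by apply: Pd_rel; apply: (relI (u := v) hT'); rewrite hT'v mv; lia.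
  move=> x; rewrite flat2 !cf_Cgen hKv (@cnt_val (k v - 2) q) // (@cnt_val2 (k v) q); last by lia.
  rewrite cf1 cf2 /f; under [X in _ = 2 * X + _ + _]eq_bigr => l _ do rewrite cf2.
  rewrite !sum_iotaSr big_split /= -[\sum_(i <- _) c * _]mulr_sumr !sumC2 /T /c; ring.
apply: (lin_s0 (r := iota 0 (cnt (k v))) (c := 2) (f := f) LP) => [l _|x]; first exact: hf.
rewrite flat2 !cf_Cgen hKv mulr0 addr0 /f.
under [X in _ = 2 * X]eq_bigr => l _ do rewrite cf2.
rewrite big_split /= -[\sum_(i <- _) c * _]mulr_sumr !sumC2 /c; ring.
Qed.

Lemma CR (r : comb K V) : basic_rel m1 e r -> Pd (flat Cgen r).
Proof.
case=> k [u [hk [[hu ->]|[[hu ->]|[hu ->]]]]].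
- exact: CR_I hk hu.
- case: (eqVneq u v) hu => [-> hu|hne hu]; last exact: CR_IIs_u.
  exact: CR_IIs_v.
- case: (eqVneq u v) hu => [-> hu|hne hu]; last exact: CR_IIa_u.
  exact: CR_IIa_v.
Qed.


Lemma cf_mapB s x : coef (mapB v s) x = \sum_(q <- s) q.1 * coef (Bgen q.2) x.
Proof.
rewrite coefE (ev_mapB _ (fun y => ind y x)); apply: eq_bigr => q _; by rewrite coefE.
Qed.

Lemma pairing' (W : finType) (s : comb K W) (G : Key W -> K) :
  \sum_(q <- s) q.1 * G q.2 = \sum_(y <- undup (map snd s)) coef s y * G y.
Proof. by apply: pairing; [exact: undup_uniq | move=> y; rewrite mem_undup]. Qed.

Lemma free_C z : in_free m1 e z -> in_free m e (flat Cgen z).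
Proof.
move=> hz x; rewrite cf_flat (pairing' z (fun y => coef (Cgen y) x)).
case/sum_neq0 => y _; rewrite mulf_eq0 negb_or => /andP[hy].
rewrite cf_Cgen => /sum_neq0 [l _]; rewrite /ind; case: ifP => [/eqP <- _|]; last by rewrite mulr0 eqxx.
apply: char_m1_m; first exact: hz.
by apply/dvd2E; exists (1 + l%:Z); ring.
Qed.

Theorem main_sec :
  (forall s : comb K V, in_free m e s ->
     (in_rel m1 e (mapB v s) <-> Pd s))
  /\ (forall z : comb K V, in_free m1 e z ->
     exists s : comb K V, in_free m e s /\ in_rel m1 e (csub z (mapB v s))).
Proof.
split.
  move=> s hs; split.
    move=> hB.
    apply: (lin2 (c1 := 1) (s1 := flat Cgen (mapB v s)) (c2 := 1)
             (s2 := flat (fun k => csub [:: (1, k)] (flat Cgen (Bgen k))) s) Pd_lin).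
    - exact: (rel_lift Pd_lin CR hB (cf_flat _ _)).
    - by apply: (span_lift Pd_lin _ (cf_flat _ _)) => x /hs; apply: CB.
    - move=> k; rewrite !cf_flat (ev_mapB _ (fun y => coef (Cgen y) k)) coefE.
      rewrite !mul1r -big_split /=; apply: eq_bigr => q _.
      by rewrite cf_csub cf1 cf_flat; ring.
  case=> t [ht hr].
  apply: (lin2 (c1 := 1) (s1 := flat Bgen (csub s (mapA v p t))) (c2 := 1)
           (s2 := flat (fun k' => flat Bgen (Agen k')) t) (@in_rel_lin K V m1 e)).
  - exact: (rel_lift (@in_rel_lin K V m1 e) B_rel hr (cf_flat _ _)).
  - by apply: (span_lift (@in_rel_lin K V m1 e) _ (cf_flat _ _)) => x /ht; apply: BA.
  - move=> k; rewrite !cf_flat cf_mapB (ev_csub _ _ (fun y => coef (Bgen y) k)) (ev_mapA _ (fun y => coef (Bgen y) k)).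
    have E : \sum_(q <- t) q.1 * coef (flat Bgen (Agen q.2)) k = \sum_(q <- t) q.1 * \sum_(y <- Agen q.2) y.1 * coef (Bgen y.2) k.
      by apply: eq_bigr => q _; rewrite cf_flat.
    by rewrite !mul1r E subrK.
move=> z hz; exists (flat Cgen z); split; first exact: free_C.
apply: (span_lift (@in_rel_lin K V m1 e) (g := fun k => csub [:: (1, k)] (flat Bgen (Cgen k)))).
  by move=> x /hz; apply: BC.
move=> k; rewrite cf_csub cf_mapB (ev_flat _ _ (fun y => coef (Bgen y) k)) coefE.
rewrite -sumrB; apply: eq_bigr => q _.
by rewrite cf_csub cf1 cf_flat mulrBr.
Qed.

End Main.

Theorem lemma5p2 (R : realType) (V : finType) (m : V -> int) (e : rel V)
  (v : V) (p : nat) :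
  is_forest e -> neg_definite m e ->
  (0 < p)%N -> m v = - (p%:Z) ->
  neg_definite (plus1_m m v p) e ->
  (* exactness at H(Gamma): ker B = im A *)
  (forall s : comb R[i] V, in_free m e s ->
     (in_rel (plus1_m m v p) e (mapB v s) <->
      exists t : comb R[i] (subv v), in_free (del_m m v) (del_e e v) t /\
                 in_rel m e (csub s (mapA v p t))))
  /\
  (* exactness at H(Gamma_{+1}): B is surjective *)
  (forall z : comb R[i] V, in_free (plus1_m m v p) e z ->
     exists s : comb R[i] V, in_free m e s /\
                 in_rel (plus1_m m v p) e (csub z (mapB v s))).
Proof.
move=> [se _ _] _ p0 mv _.
have two : (2 : R[i]) != 0 by rewrite pnatr_eq0.
have [H1 H2] := @main_sec R[i] V m e v p se mv p0 two.
split; [move=> s hs; exact: H1 s hs | exact: H2].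
Qed.
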